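(* Let $G$ be a finite simple graph with $n=|V(G)|$, and let $v_1,\dots,v_r$ be a $\beta$-sequence in $G$ such that $d(v_1)+\dots+d(v_r)\le (r-1)n$. Then $r\ge W(G)$.
   Context: Graphs are finite, undirected, without loops or multiple edges; $N(v)$ is the set of vertices adjacent to $v$, $d(v)=|N(v)|$, and $N(v_1,\dots,v_k)=\bigcap_{j=1}^k N(v_j)$. Define $W(G)=\sum_{v\in V(G)}\frac{1}{n-d(v)}$. A sequence $v_1,\dots,v_r$ of vertices is a $\beta$-sequence in $G$ if (i) $d(v_1)=\max\{d(v)\mid v\in V(G)\}$, and (ii) for $2\le i\le r$, $v_i\in N(v_1,\dots,v_{i-1})$ and $d(v_i)=\max\{d(v)\mid v\in N(v_1,\dots,v_{i-1})\}$ (degrees taken in $G$). *)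

(* Defs.v *)
From mathcomp Require Import all_boot all_order all_algebra.
Set Implicit Arguments. Unset Strict Implicit. Unset Printing Implicit Defensive.
Import Order.TTheory GRing.Theory Num.Theory.

(* A finite simple graph: vertex type T : finType, adjacency e : rel T,
   assumed symmetric and irreflexive (hypotheses of the theorem). *)

Definition nbhd (T : finType) (e : rel T) (v : T) : {set T} := [set u | e v u].
Definition deg (T : finType) (e : rel T) (v : T) : nat := #|nbhd e v|.

Definition common_nbhd (T : finType) (e : rel T) (p : seq T) : {set T} :=
  [set u | all (fun w => e w u) p].

Definition W (T : finType) (e : rel T) : rat :=
  \sum_(v : T) 1 / ((#|T| - deg e v)%:R).

(* beta-sequence v_1, ..., v_r (r >= 1), stored as s = [:: v_1; ...; v_r];
   index i (0-based) of s is v_{i+1}. *)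
Definition beta_seq (T : finType) (e : rel T) (s : seq T) : Prop :=
  match s with
  | [::] => False
  | v1 :: _ =>
      (forall u : T, deg e u <= deg e v1)%N /\
      (forall i : nat, (0 < i < size s)%N ->
         let vi := nth v1 s i in
         let Ni := common_nbhd e (take i s) in
         vi \in Ni /\ (forall u : T, u \in Ni -> (deg e u <= deg e vi)%N))
  end.

(* Main.v *)
Require Import Defs.
From mathcomp Require Import all_boot all_order all_algebra.
From mathcomp Require Import zify lra.
Import Order.TTheory GRing.Theory Num.Theory.
Local Open Scope ring_scope.

Lemma nonnbr_card (T : finType) (e : rel T) (e_irr : irreflexive e) (v : T) :
  (#|T| - deg e v)%N = #|[set u | ~~ e v u]| /\ (0 < #|[set u | ~~ e v u]|)%N.
Proof.
have -> : [set u | ~~ e v u] = ~: nbhd e v.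
  by apply/setP => u; rewrite !inE.
split; first by rewrite /deg (cardsCs (~: nbhd e v)) setCK.
apply/card_gt0P; exists v; by rewrite !inE e_irr.
Qed.

Lemma cn_take (T : finType) (e : rel T) (s : seq T) i j u :
  (i <= j)%N -> u \in common_nbhd e (take j s) -> u \in common_nbhd e (take i s).
Proof.
move=> hij; rewrite !inE -(take_takel s hij).
by rewrite -{1}(cat_take_drop i (take j s)) all_cat => /andP[].
Qed.

Theorem theorem2 (T : finType) (e : rel T)
  (e_sym : symmetric e) (e_irr : irreflexive e) (s : seq T) :
  beta_seq e s ->
  (\sum_(v <- s) deg e v <= (size s - 1) * #|T|)%N ->
  W e <= (size s)%:R.
Proof.
case: s => [//|v1 s'] [hmax hstep] hsum.
set s := v1 :: s' in hstep hsum *.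
set m := size s'.
have hr : size s = m.+1 by [].
have L : forall k u, (k < size s)%N -> u \in common_nbhd e (take k s) ->
    (deg e u <= deg e (nth v1 s k))%N.
  move=> [|k] u hk hu; first exact: hmax.
  by have [_ ] := hstep k.+1 (andb_true_intro (conj (ltn0Sn k) hk)); apply.
have inlast : nth v1 s m \in common_nbhd e (take m s).
  have : forall k, k = m -> nth v1 s k \in common_nbhd e (take k s).
    move=> [|k] hk; first by rewrite inE.
    have hk' : (k.+1 < size s)%N by rewrite hr hk.
    by have [] := hstep k.+1 (andb_true_intro (conj (ltn0Sn k) hk')).
  by apply.
set n := #|T|.
pose X (i : nat) : rat := (n - deg e (nth v1 s i))%:R.
have Xpos : forall i, 0 < X i.
  move=> i; rewrite /X ltr0n; have [-> ] := @nonnbr_card _ e e_irr (nth v1 s i); by [].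
set xr := X m.
have mono : forall i, (i < size s)%N -> X i <= xr.
  move=> i hi; rewrite /X /xr ler_nat; apply: leq_sub2l; apply: L => //.
  by apply: cn_take inlast; rewrite -ltnS.
pose c (i : nat) : rat := 1 / X i - 1 / xr.
have c0 : forall i, (i < size s)%N -> 0 <= c i.
  move=> i hi; rewrite /c subr_ge0 !div1r lef_pV2 ?posrE ?Xpos //; exact: mono.
pose f (u : T) : rat := 1 / (n - deg e u)%:R.
have fmono : forall u k, (deg e u <= deg e (nth v1 s k))%N -> f u <= 1 / X k.
  move=> u k hk; rewrite /f /X !div1r lef_pV2 ?posrE ?Xpos ?ler_nat ?leq_sub2l //.
  by rewrite ltr0n; have [-> ] := @nonnbr_card _ e e_irr u.
have pv : forall u, f u <= 1 / xr +
    \sum_(i < size s) (if ~~ e (nth v1 s i) u then c i else 0).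
  move=> u.
  have sge0 : forall P : pred 'I_(size s),
      0 <= \sum_(i < size s | P i) (if ~~ e (nth v1 s i) u then c i else 0).
    move=> P; apply: sumr_ge0 => i _; case: ifP => // _; exact: c0.
  set a := fun w => ~~ e w u.
  case: (boolP (has a s)) => ha.
    have hj := ha; rewrite has_find in hj.
    set j := find a s in hj.
    have hu : u \in common_nbhd e (take j s).
      rewrite inE; apply/(all_nthP v1) => i; rewrite size_take hj => hi.
      rewrite nth_take //; have := before_find v1 hi; rewrite /a.
      by move/negbFE.
    have := fmono u j (L j u hj hu) => hf.
    have hn : ~~ e (nth v1 s j) u := nth_find v1 ha.
    rewrite (bigD1 (Ordinal hj)) //= hn addrA.
    apply: (le_trans hf); rewrite -[X in X <= _]addr0; apply: lerD; last exact: sge0.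
    by rewrite /c addrC subrK.
  have hu : u \in common_nbhd e (take m s).
    apply: (@cn_take _ _ _ m (size s)); first by rewrite hr.
    rewrite take_size inE; apply/allP => w hw.
    apply: negbNE; apply/negP => hw'; move/hasPn: ha => /(_ w hw).
    by rewrite /a hw'.
  have hf := fmono u m (L m u (ltnSn m) hu).
  apply: (le_trans hf); rewrite -[X in X <= _]addr0; apply: lerD => //; exact: sge0.
apply: (le_trans (ler_sum _ (fun u _ => pv u))).
rewrite big_split /= sumr_const exchange_big /=.
have inner : forall i : 'I_(size s),
  \sum_(u : T) (if ~~ e (nth v1 s i) u then c i else 0) = 1 - X i / xr.
  move=> i; rewrite -big_mkcond /= sumr_const.
  have [h1 _] := @nonnbr_card _ e e_irr (nth v1 s i).
  have -> : #|[pred u | ~~ e (nth v1 s i) u]| = #|[set u | ~~ e (nth v1 s i) u]|.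
    by apply: eq_card => u; rewrite !inE.
  rewrite -h1 -/n -mulr_natr -/(X i) /c mulrBl mul1r.
  by rewrite div1r mulVf ?gt_eqF ?Xpos // mulrC.
rewrite (eq_bigr _ (fun i _ => inner i)) sumrB sumr_const card_ord.
rewrite -mulr_suml.
have hX : (n%:R : rat) <= \sum_(i < size s) X i.
  rewrite /X -natr_sum ler_nat.
  have hd : forall i, (deg e (nth v1 s i) <= n)%N.
    by move=> i; rewrite /deg /n max_card.
  have e1 : (\sum_(i < size s) (n - deg e (nth v1 s i)) + \sum_(i < size s) deg e (nth v1 s i) = size s * n)%N.
    rewrite -big_split /=.
    rewrite (eq_bigr (fun _ => n)) ?sum_nat_const ?card_ord //.
    by move=> i _; rewrite subnK.
  have e2 : (\sum_(v <- s) deg e v = \sum_(i < size s) deg e (nth v1 s i))%N.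
    by rewrite (big_nth v1) big_mkord.
  move: hsum; rewrite e2 hr subn1 /= => hsum.
  rewrite hr in e1.
  rewrite mulSn in e1; rewrite ?hr in hsum; change #|T| with n in hsum. move: e1 hsum. set A := (\sum_(i < m.+1) (n - _))%N. set B := (\sum_(i < m.+1) deg e _)%N. move=> E H; have H2 : (B <= m * n)%N := H. lia.
have xp := Xpos m; rewrite -/xr in xp.
have key : 1 / xr *+ #|T| <= (\sum_(i < size s) X i) / xr.
  rewrite -mulr_natr div1r mulrC ler_pM2r ?invr_gt0 //.
have e3 : ((size s').+1)%:R = (size s)%:R :> rat by [].
move: key; rewrite e3; set a := 1 / xr *+ _; set b := _ / xr.
move=> key; lra.
Qed.
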